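(* Let $z=(z^1,\dots,z^n)$ be coordinates on an open set $Z\subset\mathbb{R}^n$, with $x^a=z^a$ ($a=1,\dots,n-1$) and $u=z^n$, and let $w=w(z)$ be a scalar unknown. The second-order equation $\tilde E(z;w_i;w_{ij})=0$ together with the condition $w=0$ is a covariant form of some second-order partial differential equation $E(x,u;u_a;u_{ab})=0$ if and only if it is invariant under the infinite-dimensional group of point transformations $(z,w)\mapsto(z,s(z)w)$, where $s$ ranges over smooth nowhere-vanishing functions of $z$.
   Context: Here $w_i=\partial w/\partial z^i$, $w_{ij}=\partial^2w/\partial z^i\partial z^j$, $u_a=\partial u/\partial x^a$, $u_{ab}=\partial^2 u/\partial x^a\partial x^b$, and one works on the region $w_n\ne0$. Invariance means invariance of the system $\{\tilde E=0,\ w=0\}$ in the second-order jet space under the second prolongation of the transformations; at points with $w=0$ the prolonged transformation acts by $w_i\mapsto s w_i$, $w_{ij}\mapsto s w_{ij}+s_i w_j+s_j w_i$ (with $s_i=\partial s/\partial z^i$). If $u=u(x)$ is defined implicitly by $w(x,u)=0$, then $u_a[w]=-w_a/w_n$ and $u_{ab}[w]=-\frac{w_{ab}}{w_n}+\frac{w_{na}w_b}{w_n^2}+\frac{w_{nb}w_a}{w_n^2}-\frac{w_aw_bw_{nn}}{w_n^3}$. The equation $\tilde E(z;w_i;w_{ij})=0$ together with $w=0$ is called a covariant form of $E(x,u;u_a;u_{ab})=0$ if, for all $z$ and all values of $(w_i,w_{ij})$ with $w_n\neq0$, $\tilde E(z;w_i;w_{ij})=0$ holds if and only if $E(z;u_a[w];u_{ab}[w])=0$.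 *)

(* Defs.v *)
From HB Require Import structures.
From mathcomp Require Import all_boot all_order all_algebra.
From mathcomp Require Import all_classical all_reals all_analysis.
Set Implicit Arguments. Unset Strict Implicit. Unset Printing Implicit Defensive.
Import Order.TTheory GRing.Theory Num.Theory.
Import numFieldNormedType.Exports.
Local Open Scope ring_scope.
Local Open Scope classical_set_scope.

Section Defs.
Variable R : realType.

Fixpoint iderive (V : normedModType R) (f : V -> R) (ds : seq V) : V -> R :=
  match ds with
  | [::] => f
  | v :: ds' => fun z => derive (iderive f ds') z v
  end.

Definition smooth_on (V : normedModType R) (Z : set V) (f : V -> R) : Prop :=
  forall (ds : seq V) (v : V) (z : V), Z z -> derivable (iderive f ds) z v.

Variable m : nat.
(* n = m.+1 ; indices 'I_m.+1 ; z^n is the index ord_max ;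
   x^a (a : 'I_m) is z^(widen a). *)
Definition xidx (a : 'I_m) : 'I_m.+1 := widen_ord (leqnSn m) a.
Definition nidx : 'I_m.+1 := ord_max.

Definition u1 (p : 'rV[R]_m.+1) : 'rV[R]_m :=
  \row_(a < m) (- p 0 (xidx a) / p 0 nidx).

Definition u2 (p : 'rV[R]_m.+1) (W : 'M[R]_m.+1) : 'M[R]_m :=
  \matrix_(a < m, b < m)
    (- W (xidx a) (xidx b) / p 0 nidx
     + W nidx (xidx a) * p 0 (xidx b) / (p 0 nidx ^+ 2)
     + W nidx (xidx b) * p 0 (xidx a) / (p 0 nidx ^+ 2)
     - p 0 (xidx a) * p 0 (xidx b) * W nidx nidx / (p 0 nidx ^+ 3)).

(* Et : (z; w_i; w_ij) -> R, E : ((x,u); u_a; u_ab) -> R, with (x,u) = z. *)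
Definition covariant_form (Z : set 'rV[R]_m.+1)
  (Et : 'rV[R]_m.+1 -> 'rV[R]_m.+1 -> 'M[R]_m.+1 -> R)
  (E : 'rV[R]_m.+1 -> 'rV[R]_m -> 'M[R]_m -> R) : Prop :=
  forall (z p : 'rV[R]_m.+1) (W : 'M[R]_m.+1), Z z -> W^T = W -> p 0 nidx != 0 ->
    (Et z p W = 0 <-> E z (u1 p) (u2 p W) = 0).

Definition grad (s : 'rV[R]_m.+1 -> R) (z : 'rV[R]_m.+1) : 'rV[R]_m.+1 :=
  \row_(i < m.+1) derive s z (delta_mx 0 i).

(* Invariance of {Et = 0, w = 0} (on the region w_n <> 0) under the second
   prolongation of (z,w) |-> (z, s(z) w), s smooth and nowhere vanishing. *)
Definition invariant_under_rescaling (Z : set 'rV[R]_m.+1)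
  (Et : 'rV[R]_m.+1 -> 'rV[R]_m.+1 -> 'M[R]_m.+1 -> R) : Prop :=
  forall s : 'rV[R]_m.+1 -> R,
    smooth_on Z s -> (forall z, Z z -> s z != 0) ->
    forall (z p : 'rV[R]_m.+1) (W : 'M[R]_m.+1), Z z -> W^T = W -> p 0 nidx != 0 ->
      Et z p W = 0 ->
      Et z (s z *: p)
           (s z *: W + (grad s z)^T *m p + p^T *m grad s z) = 0.

End Defs.

(* Main.v *)
Require Import Defs.
From HB Require Import structures.
From mathcomp Require Import all_boot all_order all_algebra.
From mathcomp Require Import all_classical all_reals all_analysis.
From mathcomp Require Import ring lra.
Import Order.TTheory GRing.Theory Num.Theory.
Import numFieldNormedType.Exports.
Local Open Scope ring_scope.
Local Open Scope classical_set_scope.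

Set Implicit Arguments. Unset Strict Implicit.
Section S.
Variable R : realType.
Variable m : nat.
Local Notation V := 'rV[R]_m.+1.

Lemma is_derive_coord (i : 'I_m.+1) (y v : V) :
  is_derive y v (fun N : V => N 0 i) (v 0 i).
Proof.
have @f : {linear V -> R}.
  by exists (fun N : V => N 0 i); do 2![eexists]; do ?[constructor];
     rewrite ?mxE// => ? *; rewrite ?mxE//; move=> ?; rewrite !mxE.
rewrite (_ : (fun _ => _) = f) //.
apply: DeriveDef.
  apply: diff_derivable; exact/linear_differentiable/coord_continuous.
rewrite deriveE; last exact/linear_differentiable/coord_continuous.
by rewrite diff_lin //; exact: coord_continuous.
Qed.

Definition Lf (l : V) (y : V) : R := \sum_(i < m.+1) y 0 i * l 0 i.

Lemma is_derive_L (l y v : V) : is_derive y v (Lf l) (Lf l v).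
Proof.
have H : is_derive y v (\sum_(i < m.+1) ((fun N : V => N 0 i) * cst (l 0 i)))
   (\sum_(i < m.+1) (v 0 i * l 0 i)).
  apply: is_derive_sum => i; apply: is_derive_eq.
    apply: is_deriveM; exact: is_derive_coord.
  by rewrite /= scaler0 add0r /GRing.scale /= mulrC.
have E : Lf l = \sum_(i < m.+1) ((fun N : V => N 0 i) * cst (l 0 i)).
  by apply: funext => N; rewrite /Lf fct_sumE; apply: eq_bigr => i _.
by rewrite {1}E.
Qed.

Lemma is_derive_polyL (l : V) (Q : {poly R}) (y v : V) :
  is_derive y v (fun y => Q.[Lf l y]) (Lf l v * Q^`().[Lf l y]).
Proof.
elim/poly_ind: Q => [|P c IH].
  have -> : (fun y : V => (0:{poly R}).[Lf l y]) = cst 0 by apply: funext => ?; rewrite horner0.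
  by apply: is_derive_eq; rewrite ?deriv0 ?horner0 ?mulr0.
have -> : (fun y : V => (P * 'X + c%:P).[Lf l y]) = (fun y => P.[Lf l y]) * Lf l + cst c.
  by apply: funext => N; rewrite /= hornerMXaddC.
apply: is_derive_eq.
  apply: is_deriveD; exact: (is_deriveM IH (is_derive_L l y v)).
rewrite derivMXaddC. rewrite /= !hornerE /GRing.scale /=. ring.
Qed.

Lemma iderive_polyL (l : V) (Q : {poly R}) (ds : seq V) :
  exists Q' : {poly R}, iderive (fun y : V => Q.[Lf l y]) ds = fun y => Q'.[Lf l y].
Proof.
elim: ds => [|v ds [Q' IH]]; first by exists Q.
exists (Lf l v *: Q'^`()); rewrite /= IH; apply: funext => y.
by rewrite (@derive_val _ _ _ _ _ _ _ (is_derive_polyL l Q' y v)) hornerZ.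
Qed.

Lemma smooth_polyL (Z : set V) (l : V) (Q : {poly R}) :
  smooth_on Z (fun y : V => Q.[Lf l y]).
Proof.
move=> ds v y _; have [Q' ->] := iderive_polyL l Q ds.
exact: (@ex_derive _ _ _ _ _ _ _ (is_derive_polyL l Q' y v)).
Qed.

Lemma Lf_delta (l : V) (i : 'I_m.+1) : Lf l (delta_mx 0 i) = l 0 i.
Proof.
rewrite /Lf (bigD1 i) //= big1 => [|j ji]; first by rewrite mxE !eqxx mul1r addr0.
by rewrite mxE (negbTE ji) andbF mul0r.
Qed.

Lemma exists_s (Z : set V) (sg : R) (g z0 : V) : sg != 0 ->
  exists s : V -> R, [/\ smooth_on Z s, (forall y, s y != 0), s z0 = sg & grad s z0 = g].
Proof.
move=> sg0.
pose l := sg^-1 *: g; pose c := Lf l z0.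
pose Q : {poly R} := sg *: (('X - c%:P) * ('X - c%:P) + ('X - c%:P) + 1).
have hQ : forall t, Q.[t] = sg * ((t - c) * (t - c) + (t - c) + 1).
  by move=> t; rewrite /Q !hornerE.
exists (fun y => Q.[Lf l y]); split.
- exact: smooth_polyL.
- move=> y; rewrite hQ mulf_eq0 negb_or sg0 /=.
  set u := Lf l y - c.
  have : 0 < u * u + u + 1.
    have -> : u * u + u + 1 = (u + 2^-1) ^+ 2 + 3 / 4 by field.
    by apply: ltr_wpDl; [exact: sqr_ge0 | by []].
  by rewrite lt0r => /andP [].
- by rewrite hQ /c subrr !mul0r !add0r mulr1.
- apply/rowP => i; rewrite mxE (@derive_val _ _ _ _ _ _ _ (is_derive_polyL l Q z0 _)) Lf_delta.
  rewrite /Q !poly.derivE !hornerE /c subrr /l mxE.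
  by rewrite /= add0r subrr add0r mulr1 mulrAC mulVf // mul1r.

Qed.

Definition T (sg : R) (g p : V) (W : 'M[R]_m.+1) : 'M[R]_m.+1 :=
  sg *: W + g^T *m p + p^T *m g.

Lemma TE sg g p W i j : T sg g p W i j = sg * W i j + g 0 i * p 0 j + p 0 i * g 0 j.
Proof. by rewrite !mxE !big_ord1 !mxE. Qed.

Lemma symE (W : 'M[R]_m.+1) i j : W^T = W -> W j i = W i j.
Proof. by move=> h; rewrite -{1}h mxE. Qed.

Lemma T_sym sg g p W : W^T = W -> (T sg g p W)^T = T sg g p W.
Proof.
move=> h; apply/matrixP => i j; rewrite mxE !TE (symE i j h); ring.
Qed.

Lemma u1_scale sg (p : V) : sg != 0 -> p 0 (nidx m) != 0 -> u1 (sg *: p) = u1 p.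
Proof. by move=> h1 h2; apply/rowP => a; rewrite !mxE; field; rewrite h1 h2. Qed.

Lemma u2_T sg g (p : V) W : sg != 0 -> p 0 (nidx m) != 0 ->
  u2 (sg *: p) (T sg g p W) = u2 p W.
Proof.
move=> h1 h2; apply/matrixP => a b; rewrite [LHS]mxE [RHS]mxE !TE !mxE.
by field; rewrite h1 h2.
Qed.

Lemma lift_nidx (a : 'I_m) : lift (nidx m) a = xidx a.
Proof. by apply: val_inj; rewrite /= /bump leqNgt ltn_ord. Qed.

Definition p0 (q : 'rV[R]_m) : V :=
  \row_i (match unlift (nidx m) i with Some a => - q 0 a | None => 1 end).
Definition W0 (U : 'M[R]_m) : 'M[R]_m.+1 :=
  \matrix_(i, j) (match unlift (nidx m) i, unlift (nidx m) j with
                  | Some a, Some b => - U a b | _, _ => 0 end).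

Definition gn (p : V) W := - (W (nidx m) (nidx m) / p 0 (nidx m)) / (2 * p 0 (nidx m)).
Definition gcan (p : V) W : V :=
  \row_i (match unlift (nidx m) i with
          | Some a => - (W (nidx m) (xidx a) / p 0 (nidx m) + gn p W * p 0 (xidx a)) / p 0 (nidx m)
          | None => gn p W end).

Lemma claim1 (p : V) : p 0 (nidx m) != 0 -> (p 0 (nidx m))^-1 *: p = p0 (u1 p).
Proof.
move=> h; apply/rowP => i; rewrite !mxE.
case: unliftP => [a ->|->]; rewrite ?lift_nidx ?mxE; by field.
Qed.

Lemma claim2 (p : V) W : p 0 (nidx m) != 0 -> W^T = W ->
  T (p 0 (nidx m))^-1 (gcan p W) p W = W0 (u2 p W).
Proof.
move=> h hs; apply/matrixP => i j; rewrite TE !mxE.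
case: unliftP => [a ->|->]; case: unliftP => [b ->|->];
  rewrite ?lift_nidx ?mxE /gn.
- by rewrite -/(xidx a) -/(xidx b); field.
- by rewrite (symE (nidx m) (xidx a) hs); field.
- by field.
- by field.
Qed.
End S.
Unset Implicit Arguments.

Lemma T_back (R : realType) (m : nat) (sg : R) (g p : 'rV[R]_m.+1) (W : 'M[R]_m.+1) : sg != 0 ->
  T (sg^-1) (- (sg^+2)^-1 *: g) (sg *: p) (T sg g p W) = W.
Proof.
move=> h; apply/matrixP => i j; rewrite !TE !mxE.
by field.
Qed.

Theorem theorem3 (R : realType) (m : nat) (Z : set 'rV[R]_m.+1) (hZ : open Z)
  (Et : 'rV[R]_m.+1 -> 'rV[R]_m.+1 -> 'M[R]_m.+1 -> R) :
  (exists E : 'rV[R]_m.+1 -> 'rV[R]_m -> 'M[R]_m -> R, covariant_form Z Et E)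
  <-> invariant_under_rescaling Z Et.
Proof.
split.
- case=> E cov s ss snz z p W Zz sym pn H.
  have sz := snz z Zz.
  change (Et z (s z *: p) (T (s z) (grad s z) p W) = 0).
  have pn' : (s z *: p) 0 (nidx m) != 0 by rewrite mxE mulf_neq0.
  have := cov z (s z *: p) (T (s z) (grad s z) p W) Zz.
  move=> c; apply: (proj2 (c (T_sym _ _ _ sym) pn')).
  rewrite u1_scale // u2_T //; exact: (proj1 (cov z p W Zz sym pn) H).
- move=> inv; exists (fun z q U => Et z (p0 q) (W0 U)).
  move=> z p W Zz sym pn /=.
  have e1 := claim1 pn; have e2 := claim2 pn sym.
  have sg0 : (p 0 (nidx m))^-1 != 0 by rewrite invr_eq0.
  split => H.
  + have [s [ss snz sz gz]] := exists_s Z (gcan p W) z sg0.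
    have := inv s ss (fun y _ => snz y) z p W Zz sym pn H.
    change (Et z (s z *: p) (T (s z) (grad s z) p W) = 0 -> 
            Et z (p0 (u1 p)) (W0 (u2 p W)) = 0).
    by rewrite sz gz e1 e2.
  + set sg := (p 0 (nidx m))^-1.
    have sg1 : sg^-1 != 0 by rewrite /sg invrK.
    have [s [ss snz sz gz]] := exists_s Z (- (sg^+2)^-1 *: gcan p W) z sg1.
    have sy : (W0 (u2 p W))^T = W0 (u2 p W) by rewrite -e2; exact: T_sym.
    have pn0 : (p0 (u1 p)) 0 (nidx m) != 0 by rewrite -e1 mxE mulf_neq0.
    have := inv s ss (fun y _ => snz y) z _ _ Zz sy pn0 H.
    change (Et z (s z *: p0 (u1 p)) (T (s z) (grad s z) (p0 (u1 p)) (W0 (u2 p W))) = 0 -> 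
            Et z p W = 0).
    rewrite sz gz -e1 -e2 T_back //.
    by rewrite scalerA mulVf // scale1r.
Qed.
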